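(* Let $I=[0,1]$ and $f_{1,\infty}$ a sequence of continuous self-maps of $I$. If $(I,f_{1,\infty})$ is weakly mixing of order $3$, then $(\mathcal{M}(I),\widetilde{f}_{1,\infty})$ is weakly mixing of all orders.
   Context: For $f_{1,\infty}=\{f_n\}_{n\ge1}$ write $f_1^n=f_n\circ\cdots\circ f_1$. $\mathcal{M}(I)$ is the space of Borel probability measures on $I$ with the weak$^*$ topology, and $\widetilde{f}_1^n(\mu)(A)=\mu((f_1^n)^{-1}(A))$ for Borel $A$. A non-autonomous system $(Y,g_{1,\infty})$ is weakly mixing of order $m$ ($m\ge2$) if for any non-empty open sets $U_1,\dots,U_m,V_1,\dots,V_m\subseteq Y$ there is $n\in\mathbb{N}$ with $g_1^n(U_i)\cap V_i\neq\emptyset$ for all $1\le i\le m$; weakly mixing of all orders means weakly mixing of order $m$ for every $m\ge2$. *)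

(* Defs.v *)
From Stdlib Require Import Reals.
Open Scope R_scope.

Definition II : Type := { x : R | 0 <= x <= 1 }.
Definition ival (x : II) : R := proj1_sig x.

Definition I_open (O : II -> Prop) : Prop :=
  forall x, O x -> exists delta, delta > 0 /\
    forall y, Rabs (ival y - ival x) < delta -> O y.

Definition I_cont (h : II -> II) : Prop :=
  forall x eps, eps > 0 -> exists delta, delta > 0 /\
    forall y, Rabs (ival y - ival x) < delta ->
      Rabs (ival (h y) - ival (h x)) < eps.

Definition I_contR (g : II -> R) : Prop :=
  forall x eps, eps > 0 -> exists delta, delta > 0 /\
    forall y, Rabs (ival y - ival x) < delta -> Rabs (g y - g x) < eps.

(** f_1^n = f_n o ... o f_1 (f_1^0 = id; f 0 is never used). *)
Fixpoint fcomp (f : nat -> II -> II) (n : nat) : II -> II :=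
  match n with
  | O => fun x => x
  | S k => fun x => f (S k) (fcomp f k x)
  end.

Definition sigma_algebra (S : (II -> Prop) -> Prop) : Prop :=
  S (fun _ => True) /\
  (forall A, S A -> S (fun x => ~ A x)) /\
  (forall A : nat -> II -> Prop, (forall n, S (A n)) -> S (fun x => exists n, A n x)).

Definition Borel (A : II -> Prop) : Prop :=
  forall S, sigma_algebra S -> (forall O, I_open O -> S O) -> S A.

Definition pw_disjoint (A : nat -> II -> Prop) : Prop :=
  forall i j, i <> j -> forall x, ~ (A i x /\ A j x).

(** A measure is a set function on all
    subsets; it is normalized to be 0 off the Borel sets so that each Borel
    probability measure is represented by exactly one set function. *)
Record ProbMeasure : Type := {
  mu :> (II -> Prop) -> R;
  mu_nonneg : forall A, Borel A -> 0 <= mu A;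
  mu_full : mu (fun _ => True) = 1;
  mu_sigma_add : forall A : nat -> II -> Prop,
      (forall n, Borel (A n)) -> pw_disjoint A ->
      infinite_sum (fun n => mu (A n)) (mu (fun x => exists n, A n x));
  mu_nonborel : forall A, ~ Borel A -> mu A = 0
}.

Definition is_pushforward (h : II -> II) (m nu : ProbMeasure) : Prop :=
  forall A, Borel A -> nu A = m (fun x => A (h (x))).

Fixpoint fsum (a : nat -> R) (k : nat) : R :=
  match k with O => 0 | S j => fsum a j + a j end.

Definition lower_sum (m : ProbMeasure) (g : II -> R) (v : R) : Prop :=
  exists (k : nat) (c : nat -> R) (A : nat -> II -> Prop),
    (forall i, (i < k)%nat ->
       0 <= c i /\ Borel (A i) /\ forall x, A i x -> c i <= g x) /\
    (forall i j, (i < k)%nat -> (j < k)%nat -> i <> j ->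
       forall x, ~ (A i x /\ A j x)) /\
    v = fsum (fun i => c i * m (A i)) k.

Definition integral_nonneg (m : ProbMeasure) (g : II -> R) (v : R) : Prop :=
  is_lub (lower_sum m g) v.

Definition integral (m : ProbMeasure) (g : II -> R) (v : R) : Prop :=
  exists a b, integral_nonneg m (fun x => Rmax (g x) 0) a /\
              integral_nonneg m (fun x => Rmax (- g x) 0) b /\ v = a - b.

Definition M_open (O : ProbMeasure -> Prop) : Prop :=
  forall m, O m -> exists (k : nat) (g : nat -> II -> R) (eps : R),
    eps > 0 /\ (forall i, (i < k)%nat -> I_contR (g i)) /\
    forall nu, (forall i, (i < k)%nat -> forall a b,
                  integral m (g i) a -> integral nu (g i) b -> Rabs (a - b) < eps) ->
               O nu.

(** Weak mixing of order m for a non-autonomous system given by a notion of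
    open set and the (graph of the) maps g_1^n, n >= 1:
    step n y z  <->  z = g_1^n (y).  Indices 1..m are rendered as 0..m-1. *)
Definition weakly_mixing_order {Y : Type} (isOpen : (Y -> Prop) -> Prop)
  (step : nat -> Y -> Y -> Prop) (m : nat) : Prop :=
  forall U V : nat -> Y -> Prop,
    (forall i, (i < m)%nat ->
       isOpen (U i) /\ isOpen (V i) /\ (exists y, U i y) /\ (exists y, V i y)) ->
    exists n, (1 <= n)%nat /\
      forall i, (i < m)%nat -> exists y z, U i y /\ step n y z /\ V i z.

Definition weakly_mixing_all {Y : Type} (isOpen : (Y -> Prop) -> Prop)
  (step : nat -> Y -> Y -> Prop) : Prop :=
  forall m, (2 <= m)%nat -> weakly_mixing_order isOpen step m.

Definition I_step (f : nat -> II -> II) (n : nat) (x y : II) : Prop :=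
  y = fcomp f n x.

Definition M_step (f : nat -> II -> II) (n : nat) (m nu : ProbMeasure) : Prop :=
  is_pushforward (fcomp f n) m nu.

(* Main.v *)
Require Import Defs.
From Stdlib Require Import Reals Arith Lra Lia Classical ClassicalEpsilon FunctionalExtensionality PropExtensionality ProofIrrelevance.
Open Scope R_scope.

Lemma ival_inj (a b : II) : ival a = ival b -> a = b.
Proof. destruct a as [x hx], b as [y hy]; simpl; intros ->. f_equal. apply proof_irrelevance. Qed.

Lemma ival_bnd (a : II) : 0 <= ival a <= 1.
Proof. destruct a; simpl; auto. Qed.

Lemma pred_ext {T} (A B : T -> Prop) : (forall x, A x <-> B x) -> A = B.
Proof. intros H; apply functional_extensionality; intros x; apply propositional_extensionality; auto. Qed.

Lemma abs_le_iff x e : Rabs x <= e <-> -e <= x <= e.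
Proof. unfold Rabs; destruct (Rcase_abs x); split; intros; lra. Qed.
Lemma abs_lt_iff x e : Rabs x < e <-> -e < x < e.
Proof. unfold Rabs; destruct (Rcase_abs x); split; intros; lra. Qed.

Definition clampR (t : R) : R := Rmax 0 (Rmin t 1).
Lemma clampR_bnd t : 0 <= clampR t <= 1.
Proof. unfold clampR, Rmax, Rmin; repeat destruct Rle_dec; lra. Qed.
Definition clamp (t : R) : II := exist _ (clampR t) (clampR_bnd t).
Lemma clamp_val t : 0 <= t <= 1 -> ival (clamp t) = t.
Proof. intros; simpl; unfold clampR, Rmax, Rmin; repeat destruct Rle_dec; lra. Qed.
Lemma clamp_ival y : clamp (ival y) = y.
Proof. apply ival_inj. apply clamp_val, ival_bnd. Qed.
Lemma clamp_lip s t : Rabs (ival (clamp s) - ival (clamp t)) <= Rabs (s - t).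
Proof. simpl; unfold clampR, Rmax, Rmin; apply abs_le_iff;
  unfold Rabs; destruct (Rcase_abs (s-t)); repeat destruct Rle_dec; lra. Qed.

Lemma fsum_ext a b k : (forall i, (i<k)%nat -> a i = b i) -> fsum a k = fsum b k.
Proof. induction k; simpl; intros; auto. rewrite IHk by (intros; apply H; lia). rewrite H by lia; auto. Qed.
Lemma fsum_plus a b k : fsum (fun i => a i + b i) k = fsum a k + fsum b k.
Proof. induction k; simpl; [lra|]. rewrite IHk; lra. Qed.
Lemma fsum_minus a b k : fsum (fun i => a i - b i) k = fsum a k - fsum b k.
Proof. induction k; simpl; [lra|]. rewrite IHk; lra. Qed.
Lemma fsum_scal c a k : fsum (fun i => c * a i) k = c * fsum a k.
Proof. induction k; simpl; [lra|]. rewrite IHk; lra. Qed.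
Lemma fsum_scalr c a k : fsum (fun i => a i * c) k = fsum a k * c.
Proof. induction k; simpl; [lra|]. rewrite IHk; lra. Qed.
Lemma fsum_le a b k : (forall i, (i<k)%nat -> a i <= b i) -> fsum a k <= fsum b k.
Proof. induction k; simpl; intros; [lra|]. assert (a k <= b k) by (apply H; lia).
  assert (fsum a k <= fsum b k) by (apply IHk; intros; apply H; lia). lra. Qed.
Lemma fsum_nonneg a k : (forall i, (i<k)%nat -> 0 <= a i) -> 0 <= fsum a k.
Proof. intros. replace 0 with (fsum (fun _ => 0) k). apply fsum_le; auto.
  induction k; simpl; auto. rewrite IHk; [lra|]. intros; apply H; lia. Qed.
Lemma fsum_zero k : fsum (fun _ => 0) k = 0.
Proof. induction k; simpl; auto. rewrite IHk; lra. Qed.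
Lemma fsum_swap (F : nat -> nat -> R) k1 k2 :
  fsum (fun i => fsum (fun j => F i j) k2) k1 = fsum (fun j => fsum (fun i => F i j) k1) k2.
Proof. induction k1; simpl. rewrite fsum_zero; auto. rewrite IHk1, <- fsum_plus. auto. Qed.
Lemma fsum_delta (F : nat -> R) k a' : (a' < k)%nat ->
  fsum (fun a => (if Nat.eq_dec a a' then 1 else 0) * F a) k = F a'.
Proof. induction k; intros; [lia|]. simpl. destruct (Nat.eq_dec k a').
  - subst. rewrite (fsum_ext _ (fun _ => 0)). rewrite fsum_zero; lra.
    intros; destruct Nat.eq_dec; [lia|lra].
  - rewrite IHk by lia. lra. Qed.
Lemma sum_fsum s n : sum_f_R0 s n = fsum s (S n).
Proof. induction n; simpl; auto. lra. rewrite IHn; simpl; auto. Qed.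

Lemma fin_eta (m : nat) (P : nat -> R -> Prop) :
  (forall i e e', 0 < e' <= e -> P i e -> P i e') ->
  (forall i, (i<m)%nat -> exists e, 0 < e /\ P i e) ->
  exists e, 0 < e /\ forall i, (i<m)%nat -> P i e.
Proof. intros Hm; induction m; intros H.
  - exists 1; split; [lra|intros; lia].
  - destruct IHm as [e1 [He1 H1]]. intros; apply H; lia.
    destruct (H m) as [e2 [He2 H2]]. lia.
    exists (Rmin e1 e2). split. apply Rmin_pos; auto.
    intros i Hi. destruct (Nat.eq_dec i m). subst. apply (Hm _ e2); auto. split; [apply Rmin_pos; auto|apply Rmin_r].
    apply (Hm _ e1); auto. split; [apply Rmin_pos; auto|apply Rmin_l]. apply H1; lia.
Qed.

Lemma open_Borel O : I_open O -> Borel O.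
Proof. intros HO S HS HSO; auto. Qed.
Lemma Borel_True : Borel (fun _ => True).
Proof. intros S HS _; apply HS. Qed.
Lemma Borel_compl A : Borel A -> Borel (fun x => ~ A x).
Proof. intros HA S HS HO. apply (proj1 (proj2 HS)). apply HA; auto. Qed.
Lemma Borel_union (A : nat -> II -> Prop) : (forall n, Borel (A n)) -> Borel (fun x => exists n, A n x).
Proof. intros HA S HS HO. apply (proj2 (proj2 HS)). intros n; apply HA; auto. Qed.
Lemma Borel_ext A B : (forall x, A x <-> B x) -> Borel A -> Borel B.
Proof. intros H; rewrite (pred_ext A B H); auto. Qed.
Lemma Borel_False : Borel (fun _ => False).
Proof. apply (Borel_ext (fun x => ~ True)). tauto. apply Borel_compl, Borel_True. Qed.
Lemma Borel_or A B : Borel A -> Borel B -> Borel (fun x => A x \/ B x).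
Proof. intros HA HB. apply (Borel_ext (fun x => exists n, (match n with O => A | _ => B end) x)).
  intros x; split. intros [[|n] H]; auto. intros [H|H]. exists O; auto. exists 1%nat; auto.
  apply Borel_union. intros [|n]; auto. Qed.
Lemma Borel_and A B : Borel A -> Borel B -> Borel (fun x => A x /\ B x).
Proof. intros HA HB. apply (Borel_ext (fun x => ~ (~ A x \/ ~ B x))).
  intros x; split; [intros H; split; apply NNPP; tauto | tauto].
  apply Borel_compl, Borel_or; apply Borel_compl; auto. Qed.

Lemma Borel_preimage h : I_cont h -> forall A, Borel A -> Borel (fun x => A (h x)).
Proof.
  intros Hh A HA S HS HO.
  set (S' := fun B : II -> Prop => S (fun x => B (h x))).
  assert (sigma_algebra S') as HS'.
  { destruct HS as [h1 [h2 h3]]; unfold S'; repeat split; simpl; auto.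
  }
  apply (HA S' HS'). intros O HOo. unfold S'. apply HO.
  intros x Ox. destruct (HOo _ Ox) as [d [Hd Hd']].
  destruct (Hh x d Hd) as [d2 [Hd2 Hd2']]. exists d2; split; auto.
Qed.

Section Meas.
Variable m : ProbMeasure.

Lemma mu_ext A B : (forall x, A x <-> B x) -> m A = m B.
Proof. intros H; rewrite (pred_ext A B H); auto. Qed.

Lemma mu_empty E : (forall x, ~ E x) -> m E = 0.
Proof.
  intros HE.
  assert (BE : Borel E) by (apply (Borel_ext (fun _ => False)); [intros x; split; [tauto| apply HE]| apply Borel_False]).
  pose proof (mu_sigma_add m (fun _ => E) (fun _ => BE)) as H.
  assert (pw_disjoint (fun _ => E)) as Hd by (intros i j _ x [h _]; apply (HE x h)).
  specialize (H Hd). rewrite (mu_ext _ E) in H by (intros x; split; [intros [_ h]; auto| intros h; exists O; auto]).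
  set (c := m E) in *. clearbody c.
  destruct (Req_dec c 0) as [|Hc]; auto. exfalso.
  destruct (H (Rabs c)) as [N HN]. apply Rabs_pos_lt; auto.
  specialize (HN (S N) ltac:(lia)). rewrite sum_cte in HN. unfold Rdist in HN.
  replace (c * INR (S (S N)) - c) with (c * INR (S N)) in HN by (rewrite !S_INR; ring).
  rewrite Rabs_mult, (Rabs_right (INR (S N))) in HN by (apply Rle_ge, pos_INR).
  rewrite S_INR in HN. pose proof (pos_INR N). pose proof (Rabs_pos c). nra.
Qed.

Lemma fin_add k (A : nat -> II -> Prop) : (forall i, (i<k)%nat -> Borel (A i)) ->
  (forall i j, (i<k)%nat -> (j<k)%nat -> i<>j -> forall x, ~(A i x /\ A j x)) ->
  m (fun x => exists i, (i<k)%nat /\ A i x) = fsum (fun i => m (A i)) k.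
Proof.
  intros HB HD.
  set (A' := fun n x => (n<k)%nat /\ A n x).
  assert (HB' : forall n, Borel (A' n)).
  { intros n. destruct (lt_dec n k).
    - apply (Borel_ext (A n)); [unfold A'; tauto| auto].
    - apply (Borel_ext (fun _ => False)); [unfold A'; intros; split; [tauto|intros [h _]; lia]|apply Borel_False]. }
  assert (HD' : pw_disjoint A').
  { intros i j Hij x [[hi ai] [hj aj]]. apply (HD i j hi hj Hij x); auto. }
  pose proof (mu_sigma_add m A' HB' HD') as H.
  apply (uniqueness_sum _ _ _ H).
  intros e He. exists k. intros n Hn. rewrite sum_fsum.
  replace (fsum (fun n0 => m (A' n0)) (S n)) with (fsum (fun i => m (A i)) k). unfold Rdist; rewrite Rminus_diag, Rabs_R0; auto.
  assert (forall j, fsum (fun n0 => m (A' n0)) (k + j) = fsum (fun i => m (A i)) k).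
  { induction j. rewrite Nat.add_0_r. apply fsum_ext. intros i Hi. apply mu_ext. unfold A'; tauto.
    rewrite Nat.add_succ_r; simpl; rewrite IHj. rewrite mu_empty; [lra|]. unfold A'; intros x [h _]; lia. }
  replace (S n) with (k + (S n - k))%nat by lia. rewrite H0; auto.
Qed.

Lemma mu_mono A B : Borel A -> Borel B -> (forall x, A x -> B x) -> m A <= m B.
Proof.
  intros HA HB HAB.
  set (C := fun n => match n with O => A | _ => (fun x => B x /\ ~ A x) end).
  assert (m B = fsum (fun i => m (C i)) 2).
  { rewrite <- (fin_add 2 C). apply mu_ext. intros x; split.
    intros hb. destruct (classic (A x)). exists O; split; [lia|auto]. exists 1%nat; split; [lia|simpl; auto].
    intros [[|[|i]] [hi h]]; simpl in h; [auto|tauto|lia].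
    intros [|[|i]] hi; simpl; [auto| apply Borel_and; [auto|apply Borel_compl; auto]|lia].
    intros [|[|i]] [|[|j]] hi hj hij x; simpl; try tauto; lia. }
  rewrite H; simpl. assert (0 <= m (fun x => B x /\ ~ A x)). apply mu_nonneg, Borel_and; [auto|apply Borel_compl; auto]. lra.
Qed.

End Meas.

Definition cells_ok (N : nat) (J : nat -> II -> Prop) :=
  (forall a, (a<N)%nat -> Borel (J a)) /\
  (forall a b, (a<N)%nat -> (b<N)%nat -> a<>b -> forall x, ~(J a x /\ J b x)) /\
  (forall x, exists a, (a<N)%nat /\ J a x).

Lemma cells_sum (m : ProbMeasure) N J : cells_ok N J -> fsum (fun a => m (J a)) N = 1.
Proof.
  intros [HB [HD HC]]. rewrite <- (fin_add m N J); auto. rewrite <- (mu_full m). apply mu_ext.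
  intros x; split; auto.
Qed.

Lemma approx (m : ProbMeasure) N J (HJ : cells_ok N J) (phi : II -> R) (c : nat -> R) eps :
  0 <= eps -> (forall x, 0 <= phi x) -> (forall a, (a<N)%nat -> 0 <= c a) ->
  (forall a x, (a<N)%nat -> J a x -> Rabs (phi x - c a) <= eps) ->
  forall v, integral_nonneg m phi v -> Rabs (v - fsum (fun a => c a * m (J a)) N) <= eps.
Proof.
  intros Heps Hphi Hc Hap v [Hub Hlub].
  pose proof (cells_sum m N J HJ) as Hsum.
  destruct HJ as [HB [HD HC]].
  apply abs_le_iff; split.
  -
    assert (fsum (fun a => Rmax (c a - eps) 0 * m (J a)) N <= v).
    { apply Hub. exists N, (fun a => Rmax (c a - eps) 0), J. split; [|split; auto].
      intros i Hi. split; [apply Rmax_r|split; auto]. intros x Jx.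
      specialize (Hap i x Hi Jx). apply abs_le_iff in Hap. specialize (Hphi x).
      unfold Rmax; destruct Rle_dec; lra. }
    assert (fsum (fun a => (c a - eps) * m (J a)) N <= fsum (fun a => Rmax (c a - eps) 0 * m (J a)) N).
    { apply fsum_le. intros i Hi. apply Rmult_le_compat_r. apply mu_nonneg; auto. apply Rmax_l. }
    assert (fsum (fun a => (c a - eps) * m (J a)) N = fsum (fun a => c a * m (J a)) N - eps * fsum (fun a => m (J a)) N).
    { rewrite <- fsum_scal, <- fsum_minus. apply fsum_ext; intros; ring. }
    rewrite Hsum in *. lra.
  -
    assert (v <= fsum (fun a => c a * m (J a)) N + eps); [|lra].
    apply Hlub. intros s [k [d [A [Hk [HAd ->]]]]].
    assert (E1 : forall i, (i<k)%nat -> m (A i) = fsum (fun a => m (fun x => A i x /\ J a x)) N).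
    { intros i Hi. rewrite <- (fin_add m N (fun a x => A i x /\ J a x)).
      - apply mu_ext. intros x; split. intros ax. destruct (HC x) as [a [ha ja]]. exists a; auto.
        intros [a [_ [h _]]]; auto.
      - intros a ha. apply Borel_and; auto. apply Hk; auto.
      - intros a b ha hb hab x [[_ h1] [_ h2]]. apply (HD a b ha hb hab x); auto. }
    apply Rle_trans with (fsum (fun i => fsum (fun a => (c a + eps) * m (fun x => A i x /\ J a x)) N) k).
    + apply fsum_le. intros i Hi. rewrite E1 by auto. rewrite <- fsum_scal. apply fsum_le.
      intros a Ha. destruct (Hk i Hi) as [hd [hb hle]].
      destruct (classic (exists x, A i x /\ J a x)) as [[x [ax jx]]|Hn].
      * apply Rmult_le_compat_r. apply mu_nonneg, Borel_and; auto.
        specialize (hle x ax). specialize (Hap a x Ha jx). apply abs_le_iff in Hap. lra.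
      * rewrite mu_empty. lra. intros x hx; apply Hn; exists x; auto.
    + rewrite fsum_swap.
      replace (fsum (fun a => c a * m (J a)) N + eps) with (fsum (fun a => (c a + eps) * m (J a)) N).
      2:{ replace (fsum (fun a => (c a + eps) * m (J a)) N) with (fsum (fun a => c a * m (J a)) N + eps * fsum (fun a => m (J a)) N). rewrite Hsum; lra.
          rewrite <- fsum_scal, <- fsum_plus. apply fsum_ext; intros; ring. }
      apply fsum_le. intros a Ha. rewrite fsum_scal. apply Rmult_le_compat_l.
      { specialize (Hc a Ha); lra. }
      rewrite <- (fin_add m k (fun i x => A i x /\ J a x)).
      * apply mu_mono. apply Borel_union. intros n.
        apply (Borel_ext (fun x => (n < k)%nat /\ (A n x /\ J a x))). tauto.
        destruct (lt_dec n k). apply Borel_and. apply (Borel_ext (fun _ => True)); [tauto|apply Borel_True].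
        apply Borel_and; auto. apply Hk; auto.
        apply (Borel_ext (fun _ => False)); [intros; split; [tauto|intros [h _]; lia]|apply Borel_False].
        auto. intros x [i [_ [_ h]]]; auto.
      * intros i Hi. apply Borel_and; auto. apply Hk; auto.
      * intros i j hi hj hij x [[h1 _] [h2 _]]. apply (HAd i j hi hj hij x); auto.
Qed.

Definition ind (P : Prop) : R := if excluded_middle_informative P then 1 else 0.
Lemma ind_T (P : Prop) : P -> ind P = 1.
Proof. unfold ind; destruct excluded_middle_informative; tauto. Qed.
Lemma ind_F (P : Prop) : ~ P -> ind P = 0.
Proof. unfold ind; destruct excluded_middle_informative; tauto. Qed.
Lemma ind_ge0 P : 0 <= ind P.
Proof. unfold ind; destruct excluded_middle_informative; lra. Qed.

Definition aval N1 N2 (w : nat -> nat -> R) (x : nat -> nat -> II) (A : II -> Prop) : R :=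
  fsum (fun a => fsum (fun b => w a b * ind (A (x a b))) N2) N1.
Definition amu N1 N2 w x (A : II -> Prop) : R :=
  if excluded_middle_informative (Borel A) then aval N1 N2 w x A else 0.
Lemma amu_borel N1 N2 w x A : Borel A -> amu N1 N2 w x A = aval N1 N2 w x A.
Proof. unfold amu; destruct excluded_middle_informative; tauto. Qed.

Definition ev (s : nat -> R) (L : R) := exists K, forall n, (n >= K)%nat -> s n = L.
Lemma ev_inf s L : ev (fun K => sum_f_R0 s K) L -> infinite_sum s L.
Proof. intros [K HK] e He. exists K. intros n Hn. rewrite HK by auto. unfold Rdist. rewrite Rminus_diag, Rabs_R0; auto. Qed.
Lemma ev_fsum (s : nat -> nat -> R) L k : (forall i, (i<k)%nat -> ev (s i) (L i)) ->
  ev (fun K => fsum (fun i => s i K) k) (fsum L k).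
Proof. induction k; intros H. exists O; intros; simpl; auto.
  destruct IHk as [K1 H1]. intros; apply H; lia. destruct (H k) as [K2 H2]; [lia|].
  exists (max K1 K2). intros n Hn. simpl. rewrite H1, H2 by lia. auto. Qed.
Lemma ev_scal s L c : ev s L -> ev (fun K => c * s K) (c * L).
Proof. intros [K HK]; exists K; intros n Hn; rewrite HK; auto. Qed.

Lemma ind_sum (A : nat -> II -> Prop) y : pw_disjoint A ->
  ev (fun K => sum_f_R0 (fun n => ind (A n y)) K) (ind (exists n, A n y)).
Proof.
  intros HD. destruct (classic (exists n, A n y)) as [[n0 H0]|Hn].
  - rewrite ind_T by eauto. exists n0. intros n Hn.
    assert (forall K, (K < n0)%nat -> sum_f_R0 (fun n => ind (A n y)) K = 0).
    { induction K; intros HK; simpl. apply ind_F. intros h. apply (HD 0%nat n0 ltac:(lia) y); auto.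
      rewrite IHK by lia. rewrite ind_F; [lra|]. intros h. apply (HD (S K) n0 ltac:(lia) y); auto. }
    assert (forall j, sum_f_R0 (fun n => ind (A n y)) (n0 + j) = 1).
    { induction j. rewrite Nat.add_0_r. destruct n0; simpl. apply ind_T; auto.
      rewrite H by lia. rewrite ind_T; auto. lra.
      rewrite Nat.add_succ_r. simpl. rewrite IHj. rewrite ind_F; [lra|].
      intros h. apply (HD (S (n0 + j)) n0 ltac:(lia) y); auto. }
    replace n with (n0 + (n - n0))%nat by lia. apply H1.
  - rewrite ind_F by auto. exists O. intros n _. induction n; simpl. apply ind_F; eauto.
    rewrite IHn, ind_F; eauto. lra.
Qed.

Lemma sum_swap (F : nat -> nat -> R) k K :
  sum_f_R0 (fun n => fsum (fun a => F a n) k) K = fsum (fun a => sum_f_R0 (F a) K) k.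
Proof. rewrite sum_fsum. rewrite fsum_swap. apply fsum_ext. intros; rewrite sum_fsum; auto. Qed.

Definition atomic N1 N2 (w : nat -> nat -> R) (x : nat -> nat -> II)
  (Hw : forall a b, (a<N1)%nat -> (b<N2)%nat -> 0 <= w a b)
  (H1 : fsum (fun a => fsum (fun b => w a b) N2) N1 = 1) : ProbMeasure.
Proof.
  refine {| mu := amu N1 N2 w x |}.
  - intros A HA. rewrite amu_borel by auto. unfold aval. apply fsum_nonneg; intros a Ha.
    apply fsum_nonneg; intros b Hb. apply Rmult_le_pos; auto. apply ind_ge0.
  - rewrite amu_borel by apply Borel_True. unfold aval. rewrite <- H1.
    apply fsum_ext; intros; apply fsum_ext; intros. rewrite ind_T; auto; ring.
  - intros A HA HD. rewrite amu_borel by (apply Borel_union; auto).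
    replace (fun n => amu N1 N2 w x (A n)) with (fun n => aval N1 N2 w x (A n))
      by (apply functional_extensionality; intros; rewrite amu_borel; auto).
    apply ev_inf. unfold aval.
    assert (ev (fun K => fsum (fun a => sum_f_R0 (fun n => fsum (fun b => w a b * ind (A n (x a b))) N2) K) N1)
      (fsum (fun a => fsum (fun b => w a b * ind (exists n, A n (x a b))) N2) N1)) as [K HK].
    { apply ev_fsum. intros a Ha.
      replace (fun K => sum_f_R0 (fun n => fsum (fun b => w a b * ind (A n (x a b))) N2) K)
        with (fun K => fsum (fun b => w a b * sum_f_R0 (fun n => ind (A n (x a b))) K) N2).
      apply (ev_fsum (fun b K => w a b * sum_f_R0 (fun n => ind (A n (x a b))) K)).
      intros b Hb. apply ev_scal. apply ind_sum; auto.
      apply functional_extensionality; intros K. rewrite (sum_swap (fun b n => w a b * ind (A n (x a b)))).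
      apply fsum_ext; intros b Hb. rewrite sum_fsum, sum_fsum. symmetry; apply fsum_scal. }
    exists K. intros n Hn. rewrite <- (HK n Hn). apply sum_swap.
  - intros A HA. unfold amu. destruct excluded_middle_informative; tauto.
Defined.

Lemma atomic_val N1 N2 w x Hw H1 A : Borel A -> mu (atomic N1 N2 w x Hw H1) A = aval N1 N2 w x A.
Proof. intros; simpl; apply amu_borel; auto. Qed.

Lemma Rmax0_lip a b : Rabs (Rmax a 0 - Rmax b 0) <= Rabs (a - b).
Proof. apply abs_le_iff. unfold Rmax; unfold Rabs; destruct (Rcase_abs (a-b)); repeat destruct Rle_dec; lra. Qed.

Lemma close_integrals (m1 m2 : ProbMeasure) N J (HJ : cells_ok N J) (mid : nat -> II)
  (g : II -> R) eps (Heps : 0 <= eps)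
  (HUC : forall a x, (a<N)%nat -> J a x -> Rabs (g x - g (mid a)) <= eps)
  (Hag : forall a, (a<N)%nat -> m1 (J a) = m2 (J a)) :
  forall v1 v2, integral m1 g v1 -> integral m2 g v2 -> Rabs (v1 - v2) <= 4*eps.
Proof.
  intros v1 v2 [a1 [b1 [Ha1 [Hb1 ->]]]] [a2 [b2 [Ha2 [Hb2 ->]]]].
  assert (Hp : forall a x, (a<N)%nat -> J a x -> Rabs (Rmax (g x) 0 - Rmax (g (mid a)) 0) <= eps).
  { intros; eapply Rle_trans; [apply Rmax0_lip|auto]. }
  assert (Hn : forall a x, (a<N)%nat -> J a x -> Rabs (Rmax (- g x) 0 - Rmax (- g (mid a)) 0) <= eps).
  { intros; eapply Rle_trans; [apply Rmax0_lip|]. replace (- g x - - g (mid a)) with (- (g x - g (mid a))) by ring.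
    rewrite Rabs_Ropp; auto. }
  pose proof (approx m1 N J HJ _ (fun a => Rmax (g (mid a)) 0) eps Heps (fun x => Rmax_r _ _) (fun a _ => Rmax_r _ _) Hp _ Ha1) as E1.
  pose proof (approx m2 N J HJ _ (fun a => Rmax (g (mid a)) 0) eps Heps (fun x => Rmax_r _ _) (fun a _ => Rmax_r _ _) Hp _ Ha2) as E2.
  pose proof (approx m1 N J HJ _ (fun a => Rmax (- g (mid a)) 0) eps Heps (fun x => Rmax_r _ _) (fun a _ => Rmax_r _ _) Hn _ Hb1) as E3.
  pose proof (approx m2 N J HJ _ (fun a => Rmax (- g (mid a)) 0) eps Heps (fun x => Rmax_r _ _) (fun a _ => Rmax_r _ _) Hn _ Hb2) as E4.
  rewrite (fsum_ext _ (fun a => Rmax (g (mid a)) 0 * m1 (J a))) in E2 by (intros; rewrite Hag; auto).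
  rewrite (fsum_ext _ (fun a => Rmax (- g (mid a)) 0 * m1 (J a))) in E4 by (intros; rewrite Hag; auto).
  apply abs_le_iff in E1, E2, E3, E4. apply abs_le_iff. lra.
Qed.

Lemma cont_of (F : R -> R) :
  (forall x eps, eps > 0 -> exists d, d > 0 /\ forall y, Rabs (y - x) < d -> Rabs (F y - F x) < eps) ->
  continuity F.
Proof. intros H x. unfold continuity_pt, continue_in, limit1_in, limit_in; simpl; unfold Rdist.
  intros eps He. destruct (H x eps He) as [d [Hd Hd']]. exists d; split; auto. intros y [_ Hy]; auto. Qed.

Lemma contR_ext (g : II -> R) : I_contR g -> continuity (fun t => g (clamp t)).
Proof. intros Hg. apply cont_of. intros x eps He. destruct (Hg (clamp x) eps He) as [d [Hd Hd']].
  exists d; split; auto. intros y Hy. apply Hd'. eapply Rle_lt_trans; [apply clamp_lip|auto]. Qed.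

Lemma I_cont_R (h : II -> II) : I_cont h -> I_contR (fun x => ival (h x)).
Proof. intros H x eps He. destruct (H x eps He) as [d [Hd Hd']]. exists d; split; auto. Qed.

Lemma unif_cont (g : II -> R) : I_contR g -> forall eps, eps > 0 -> exists eta, eta > 0 /\
  forall y z, Rabs (ival y - ival z) < eta -> Rabs (g y - g z) < eps.
Proof.
  intros Hg eps He.
  pose proof (Heine (fun t => g (clamp t)) (fun c => 0 <= c <= 1) (compact_P3 0 1)) as H.
  destruct (H (fun x _ => contR_ext g Hg x) (mkposreal eps He)) as [[d Hd] Hd']. simpl in Hd'.
  exists d; split; auto. intros y z Hyz. specialize (Hd' (ival y) (ival z) (ival_bnd y) (ival_bnd z) Hyz).
  rewrite !clamp_ival in Hd'. auto.
Qed.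

Lemma ivt_II (h : II -> II) (Hh : I_cont h) (u1 u2 : II) (c : R) :
  ival (h u1) < c -> c < ival (h u2) ->
  exists u, Rmin (ival u1) (ival u2) <= ival u <= Rmax (ival u1) (ival u2) /\ ival (h u) = c.
Proof.
  intros H1 H2.
  pose proof (contR_ext _ (I_cont_R h Hh)) as HC. simpl in HC.
  pose proof (ival_bnd u1). pose proof (ival_bnd u2).
  destruct (Rtotal_order (ival u1) (ival u2)) as [Hlt|[Heq|Hgt]].
  - destruct (IVT (fun t => ival (h (clamp t)) - c) (ival u1) (ival u2)) as [z [Hz Hz']]; auto.
    + apply continuity_minus; auto. apply continuity_const. intros a b; auto.
    + rewrite clamp_ival; lra.
    + rewrite clamp_ival; lra.
    + exists (clamp z). rewrite clamp_val by lra. split. unfold Rmin, Rmax; repeat destruct Rle_dec; lra. lra.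
  - apply ival_inj in Heq; subst; lra.
  - destruct (IVT (fun t => c - ival (h (clamp t))) (ival u2) (ival u1)) as [z [Hz Hz']]; auto.
    + apply continuity_minus; auto. apply continuity_const. intros a b; auto.
    + rewrite clamp_ival; lra.
    + rewrite clamp_ival; lra.
    + exists (clamp z). rewrite clamp_val by lra. split. unfold Rmin, Rmax; repeat destruct Rle_dec; lra. lra.
Qed.

Section F.
Variable f : nat -> II -> II.
Hypothesis hcont : forall n, (1 <= n)%nat -> I_cont (f n).

Lemma fcomp_cont n : I_cont (fcomp f n).
Proof.
  induction n; simpl.
  - intros x eps He; exists eps; split; auto.
  - intros x eps He. destruct (hcont (S n) ltac:(lia) (fcomp f n x) eps He) as [d1 [Hd1 Hd1']].
    destruct (IHn x d1 Hd1) as [d2 [Hd2 Hd2']]. exists d2; split; auto.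
Qed.

Lemma fcomp_fact k n x y : (k <= n)%nat -> fcomp f k x = fcomp f k y -> fcomp f n x = fcomp f n y.
Proof. intros Hkn; induction Hkn; auto; simpl; intros H; rewrite IHHkn; auto. Qed.

Lemma fin_cont x K : exists r, 0 < r /\ forall n, (n <= K)%nat -> forall y,
  Rabs (ival y - ival x) < r -> Rabs (ival (fcomp f n y) - ival (fcomp f n x)) < /4.
Proof.
  destruct (fin_eta (S K) (fun n r => forall y, Rabs (ival y - ival x) < r -> Rabs (ival (fcomp f n y) - ival (fcomp f n x)) < /4)) as [r [Hr H]].
  - intros i e e' He HP y Hy. apply HP. lra.
  - intros i Hi. destruct (fcomp_cont i x (/4) ltac:(lra)) as [d [Hd Hd']]. exists d; split; auto.
  - exists r; split; auto. intros n Hn; apply H; lia.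
Qed.
End F.

Definition ball (x : II) r := fun y => Rabs (ival y - ival x) < r.
Definition Lo d := fun y => ival y < d.
Definition Hi d := fun y => 1 - d < ival y.
Definition Mid d := fun y => d < ival y < 1 - d.

Lemma ball_open x r : I_open (ball x r).
Proof. intros y Hy. unfold ball in *. exists (r - Rabs (ival y - ival x)); split. lra.
  intros z Hz. apply abs_lt_iff in Hz. apply abs_lt_iff.
  unfold Rabs in *. destruct (Rcase_abs (ival y - ival x)); lra. Qed.
Lemma Lo_open d : I_open (Lo d).
Proof. intros y Hy; unfold Lo in *. exists (d - ival y); split. lra. intros z Hz; apply abs_lt_iff in Hz; lra. Qed.
Lemma Hi_open d : I_open (Hi d).
Proof. intros y Hy; unfold Hi in *. exists (ival y - (1 - d)); split. lra. intros z Hz; apply abs_lt_iff in Hz; lra. Qed.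
Lemma and_open A B : I_open A -> I_open B -> I_open (fun x => A x /\ B x).
Proof. intros HA HB y [Ay By]. destruct (HA y Ay) as [d1 [H1 H1']]. destruct (HB y By) as [d2 [H2 H2']].
  exists (Rmin d1 d2); split. apply Rmin_pos; lra. intros z Hz. split.
  apply H1'. eapply Rlt_le_trans; [apply Hz| apply Rmin_l]. apply H2'. eapply Rlt_le_trans; [apply Hz| apply Rmin_r]. Qed.
Lemma Mid_open d : I_open (Mid d).
Proof. apply (and_open (fun y => d < ival y) (fun y => ival y < 1 - d)).
  intros y Hy. exists (ival y - d); split. lra. intros z Hz; apply abs_lt_iff in Hz; lra.
  intros y Hy. exists (1 - d - ival y); split. lra. intros z Hz; apply abs_lt_iff in Hz; lra. Qed.
Lemma pre_open h O : I_cont h -> I_open O -> I_open (fun x => O (h x)).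
Proof. intros Hh HO x Ox. destruct (HO _ Ox) as [d [Hd Hd']].
  destruct (Hh x d Hd) as [d2 [Hd2 Hd2']]. exists d2; split; auto. Qed.

Section Spread.
Variable f : nat -> II -> II.
Hypothesis hcont : forall n, (1 <= n)%nat -> I_cont (f n).
Hypothesis hwm3 : weakly_mixing_order I_open (I_step f) 3.
Variable dl : R.
Hypothesis Hdl : 0 < dl < /4.

Notation F := (fcomp f).

Lemma wm3 (B1 B2 B3 V1 V2 V3 : II -> Prop) :
  I_open B1 -> I_open B2 -> I_open B3 -> I_open V1 -> I_open V2 -> I_open V3 ->
  (exists y, B1 y) -> (exists y, B2 y) -> (exists y, B3 y) ->
  (exists y, V1 y) -> (exists y, V2 y) -> (exists y, V3 y) ->
  exists n, (1 <= n)%nat /\ (exists y, B1 y /\ V1 (F n y)) /\ (exists y, B2 y /\ V2 (F n y))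
    /\ (exists y, B3 y /\ V3 (F n y)).
Proof.
  intros. destruct (hwm3 (fun i => match i with O => B1 | 1%nat => B2 | _ => B3 end)
    (fun i => match i with O => V1 | 1%nat => V2 | _ => V3 end)) as [n [Hn HH]].
  - intros [|[|[|i]]] Hi; repeat split; auto; lia.
  - exists n; split; auto.
    destruct (HH 0%nat ltac:(lia)) as [y [z [h1 [h2 h3]]]].
    destruct (HH 1%nat ltac:(lia)) as [y' [z' [h1' [h2' h3']]]].
    destruct (HH 2%nat ltac:(lia)) as [y'' [z'' [h1'' [h2'' h3'']]]].
    unfold I_step in *; subst. repeat split; eauto.
Qed.

Lemma pt_exists d : 0 < d < /4 -> (exists y, Lo d y) /\ (exists y, Hi d y) /\ (exists y, Mid d y).
Proof. intros Hd. split; [|split].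
  exists (clamp 0); unfold Lo; rewrite clamp_val; lra.
  exists (clamp 1); unfold Hi; rewrite clamp_val; lra.
  exists (clamp (/2)); unfold Mid; rewrite clamp_val; lra. Qed.

Lemma nosmall x K r n b1 b2 :
  (forall n, (n <= K)%nat -> forall y, Rabs (ival y - ival x) < r -> Rabs (ival (F n y) - ival (F n x)) < /4) ->
  ball x r b1 -> ball x r b2 -> Lo dl (F n b1) -> Hi dl (F n b2) -> (K < n)%nat.
Proof.
  intros H h1 h2 l1 l2. destruct (le_lt_dec n K) as [Hle|]; auto. exfalso.
  pose proof (H n Hle b1 h1). pose proof (H n Hle b2 h2). unfold Lo, Hi in *.
  apply abs_lt_iff in H0, H1. lra.
Qed.

Lemma hit x r k b1 b2 (y : II) : ball x r b1 -> ball x r b2 ->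
  ival (F k b1) < ival y -> ival y < ival (F k b2) -> exists u, ball x r u /\ F k u = y.
Proof.
  intros h1 h2 l1 l2. destruct (ivt_II (F k) (fcomp_cont f hcont k) b1 b2 (ival y) l1 l2) as [u [Hu Hu']].
  exists u; split. unfold ball in *. apply abs_lt_iff in h1, h2. apply abs_lt_iff.
  unfold Rmin, Rmax in Hu; repeat destruct Rle_dec in Hu; lra.
  apply ival_inj; auto.
Qed.

Lemma dom_step M (U : nat -> II -> Prop) : (forall i, (i<M)%nat -> I_open (U i) /\ exists y, U i y) ->
  exists Z K, I_open Z /\ (exists z, Z z) /\ forall i, (i<M)%nat -> forall n, (K <= n)%nat ->
    forall z, Z z -> exists u, U i u /\ F n u = F n z.
Proof.
  induction M; intros HU.
  - exists (fun _ => True), O. split. intros y _; exists 1; split; [lra|auto].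
    split. exists (clamp 0); auto. intros; lia.
  - destruct IHM as [Z [K [HZo [[z0 Hz0] HD]]]]. intros; apply HU; lia.
    destruct (HU M ltac:(lia)) as [HUo [x Hx]].
    destruct (HUo x Hx) as [r0 [Hr0 Hr0']].
    destruct (fin_cont f hcont x K) as [r1 [Hr1 Hr1']].
    set (r := Rmin r0 r1).
    assert (Hr : 0 < r) by (apply Rmin_pos; lra).
    destruct (pt_exists dl Hdl) as [PL [PH PM]].
    assert (Bx : ball x r x) by (unfold ball; rewrite Rminus_diag, Rabs_R0; lra).
    assert (W := wm3 (ball x r) (ball x r) Z (Lo dl) (Hi dl) (Mid dl) (ball_open _ _) (ball_open _ _) HZo
      (Lo_open _) (Hi_open _) (Mid_open _) (ex_intro _ x Bx) (ex_intro _ x Bx) (ex_intro _ z0 Hz0) PL PH PM).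
    destruct W as [k [Hk [[b1 [Hb1 Lb1]] [[b2 [Hb2 Lb2]] [z [Hz Mz]]]]]].
    assert (HkK : (K < k)%nat).
    { apply (nosmall x K r k b1 b2); auto. intros n Hn y Hy. apply Hr1'; auto.
      eapply Rlt_le_trans; [apply Hy|apply Rmin_r]. }
    exists (fun w => Z w /\ Mid dl (F k w)), k. split; [|split].
    + apply and_open; auto. apply pre_open; auto. apply fcomp_cont; auto. apply Mid_open.
    + exists z; auto.
    + intros i Hii n Hn w [Zw Mw]. destruct (Nat.eq_dec i M).
      * subst. unfold Lo, Hi, Mid in *.
        destruct (hit x r k b1 b2 (F k w) Hb1 Hb2) as [u [Hu Hu']]; try lra.
        exists u; split. apply Hr0'. unfold ball in Hu. eapply Rlt_le_trans; [apply Hu|apply Rmin_l].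
        apply (fcomp_fact f k); auto.
      * apply HD; auto; lia.
Qed.

Lemma spread M (U : nat -> II -> Prop) : (forall i, (i<M)%nat -> I_open (U i) /\ exists y, U i y) ->
  exists n, (1 <= n)%nat /\ forall i, (i<M)%nat -> forall y, dl <= ival y <= 1 - dl ->
    exists u, U i u /\ F n u = y.
Proof.
  intros HU. destruct (dom_step M U HU) as [Z [K [HZo [[z0 Hz0] HD]]]].
  destruct (HZo z0 Hz0) as [r0 [Hr0 Hr0']].
  destruct (fin_cont f hcont z0 K) as [r1 [Hr1 Hr1']].
  set (r := Rmin r0 r1).
  assert (Hr : 0 < r) by (apply Rmin_pos; lra).
  destruct (pt_exists dl Hdl) as [PL [PH PM]].
  assert (Bx : ball z0 r z0) by (unfold ball; rewrite Rminus_diag, Rabs_R0; lra).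
  assert (W := wm3 (ball z0 r) (ball z0 r) (ball z0 r) (Lo dl) (Hi dl) (Lo dl) (ball_open _ _) (ball_open _ _) (ball_open _ _)
      (Lo_open _) (Hi_open _) (Lo_open _) (ex_intro _ z0 Bx) (ex_intro _ z0 Bx) (ex_intro _ z0 Bx) PL PH PL).
  destruct W as [n [Hn [[b1 [Hb1 Lb1]] [[b2 [Hb2 Lb2]] _]]]].
  assert (HnK : (K < n)%nat).
  { apply (nosmall z0 K r n b1 b2); auto. intros n' Hn' y Hy. apply Hr1'; auto.
    eapply Rlt_le_trans; [apply Hy|apply Rmin_r]. }
  exists n; split; auto. intros i Hii y Hy. unfold Lo, Hi in *.
  destruct (hit z0 r n b1 b2 y Hb1 Hb2) as [w [Hw Hw']]; try lra.
  assert (Zw : Z w). { apply Hr0'. unfold ball in Hw. eapply Rlt_le_trans; [apply Hw|apply Rmin_l]. }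
  destruct (HD i Hii n ltac:(lia) w Zw) as [u [Hu Hu']]. exists u; split; auto. congruence.
Qed.
End Spread.

Definition Jc (N : nat) a (y : II) := INR a <= INR N * ival y /\ (INR N * ival y < INR a + 1 \/ S a = N).
Definition Oc (N : nat) a (y : II) := INR a < INR N * ival y < INR a + 1.
Definition midp (N : nat) a := clamp ((INR a + /2) / INR N).

Lemma lt_open n c : 0 < n -> I_open (fun y => n * ival y < c).
Proof. intros Hn y Hy. exists ((c - n * ival y) / n); split. apply Rdiv_lt_0_compat; lra.
  intros z Hz. apply abs_lt_iff in Hz. destruct Hz as [_ Hz].
  apply (Rmult_lt_compat_l n) in Hz; auto. replace (n * ((c - n * ival y) / n)) with (c - n * ival y) in Hz by (field; lra). nra. Qed.
Lemma gt_open n c : 0 < n -> I_open (fun y => c < n * ival y).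
Proof. intros Hn y Hy. exists ((n * ival y - c) / n); split. apply Rdiv_lt_0_compat; lra.
  intros z Hz. apply abs_lt_iff in Hz. destruct Hz as [Hz _].
  apply (Rmult_lt_compat_l n) in Hz; auto. replace (n * - ((n * ival y - c) / n)) with (- (n * ival y - c)) in Hz by (field; lra). nra. Qed.

Section Cells.
Variable N : nat.
Hypothesis HN : (1 <= N)%nat.
Lemma INRN_pos : 0 < INR N.
Proof. apply lt_0_INR; lia. Qed.
Lemma INR_lt_N a : (a < N)%nat -> INR a + 1 <= INR N.
Proof. intros; rewrite <- S_INR; apply le_INR; lia. Qed.

Lemma Jc_Borel a : Borel (Jc N a).
Proof.
  pose proof INRN_pos.
  assert (B1 : Borel (fun y => INR a <= INR N * ival y)).
  { apply (Borel_ext (fun y => ~ (INR N * ival y < INR a))). intros; lra.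
    apply Borel_compl, open_Borel, lt_open; auto. }
  apply Borel_and; auto. apply Borel_or. apply open_Borel, lt_open; auto.
  destruct (Nat.eq_dec (S a) N). apply (Borel_ext (fun _ => True)); [tauto|apply Borel_True].
  apply (Borel_ext (fun _ => False)); [tauto|apply Borel_False].
Qed.

Lemma Jc_ok : cells_ok N (Jc N).
Proof.
  split; [|split].
  - intros; apply Jc_Borel.
  - intros a b Ha Hb Hab y [[h1 h2] [h3 h4]].
    destruct (Nat.lt_total a b) as [Hlt|[Heq|Hlt]]; [|lia|].
    + assert (INR a + 1 <= INR b) by (rewrite <- S_INR; apply le_INR; lia).
      destruct h2; [lra|lia].
    + assert (INR b + 1 <= INR a) by (rewrite <- S_INR; apply le_INR; lia).
      destruct h4; [lra|lia].
  - intros y. pose proof (ival_bnd y). pose proof INRN_pos.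
    assert (forall d a, (a + d = N - 1)%nat -> INR a <= INR N * ival y -> exists a', (a' < N)%nat /\ Jc N a' y).
    { induction d; intros a Had Ha.
      - exists a; split; [lia|]. split; auto. right; lia.
      - destruct (Rlt_le_dec (INR N * ival y) (INR a + 1)).
        + exists a; split; [lia|]. split; auto.
        + apply (IHd (S a)); [lia|]. rewrite S_INR; auto. }
    apply (H1 (N - 1)%nat 0%nat); [lia|]. simpl. nra.
Qed.

Lemma Jc_diam a y z : (a < N)%nat -> Jc N a y -> Jc N a z -> INR N * Rabs (ival y - ival z) <= 1.
Proof.
  intros Ha [h1 h2] [h3 h4]. pose proof (ival_bnd y). pose proof (ival_bnd z). pose proof INRN_pos. pose proof (pos_INR a).
  assert (INR N * ival y <= INR a + 1 /\ INR N * ival z <= INR a + 1).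
  { assert (e : S a = N -> INR N = INR a + 1) by (intros <-; rewrite S_INR; auto).
    destruct h2, h4; split; try lra; rewrite e by auto; nra. }
  rewrite <- (Rabs_right (INR N)) by lra. rewrite <- Rabs_mult. apply abs_le_iff. nra.
Qed.

Lemma midp_val a : (a < N)%nat -> ival (midp N a) = (INR a + /2) / INR N.
Proof. intros Ha. pose proof INRN_pos. pose proof (INR_lt_N a Ha). pose proof (pos_INR a).
  unfold midp. apply clamp_val. split. unfold Rdiv; apply Rmult_le_pos; [lra|left; apply Rinv_0_lt_compat; lra].
  apply (Rmult_le_reg_r (INR N)); auto. unfold Rdiv; rewrite Rmult_assoc, Rinv_l by lra. lra. Qed.

Lemma midp_N a : (a < N)%nat -> INR N * ival (midp N a) = INR a + /2.
Proof. intros Ha. rewrite midp_val by auto. pose proof INRN_pos. field; lra. Qed.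

Lemma midp_O a : (a < N)%nat -> Oc N a (midp N a).
Proof. intros Ha; unfold Oc; rewrite midp_N; auto; lra. Qed.
Lemma Oc_Jc a y : Oc N a y -> Jc N a y.
Proof. unfold Oc, Jc; intros; split; [lra|left; lra]. Qed.
Lemma Oc_open a : I_open (Oc N a).
Proof. pose proof INRN_pos. apply and_open; [apply gt_open|apply lt_open]; auto. Qed.

Definition dl := / (4 * (INR N + 1)).
Lemma dl_bnd : 0 < dl < /4.
Proof. pose proof INRN_pos. unfold dl. split. apply Rinv_0_lt_compat; lra.
  apply Rinv_lt_contravar; nra. Qed.
Lemma midp_dl b : (b < N)%nat -> dl <= ival (midp N b) <= 1 - dl.
Proof.
  intros Hb. pose proof INRN_pos. pose proof (INR_lt_N b Hb). pose proof (pos_INR b).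
  assert (e : ival (midp N b) * INR N = INR b + /2) by (rewrite <- midp_N; auto; ring).
  assert (dl * INR N <= /4). { unfold dl. apply (Rmult_le_reg_l (4 * (INR N + 1))). nra.
    rewrite <- Rmult_assoc, Rinv_r by lra. nra. }
  assert (0 < dl) by apply dl_bnd.
  split; apply (Rmult_le_reg_r (INR N)); auto; nra.
Qed.

Lemma ind_Jc a a' y : (a < N)%nat -> (a' < N)%nat -> Jc N a y ->
  ind (Jc N a' y) = if Nat.eq_dec a a' then 1 else 0.
Proof. intros Ha Ha' Hy. destruct Nat.eq_dec. subst; apply ind_T; auto.
  apply ind_F. intros h. destruct Jc_ok as [_ [HD _]]. apply (HD a a' Ha Ha' n y); auto. Qed.
End Cells.

Definition Good (O : ProbMeasure -> Prop) eta :=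
  exists (m0 : ProbMeasure) (k : nat) (g : nat -> II -> R) (eps : R), eps > 0 /\
    (forall j, (j<k)%nat -> forall y z, Rabs (ival y - ival z) < eta -> Rabs (g j y - g j z) < eps/5) /\
    forall nu, (forall j, (j<k)%nat -> forall a b, integral m0 (g j) a -> integral nu (g j) b -> Rabs (a - b) < eps) -> O nu.

Lemma Good_mono O e e' : 0 < e' <= e -> Good O e -> Good O e'.
Proof. intros He [m0 [k [g [eps [H1 [H2 H3]]]]]]. exists m0, k, g, eps; repeat split; auto.
  intros j Hj y z Hyz. apply H2; auto; lra. Qed.

Lemma Good_exists O : M_open O -> (exists m, O m) -> exists eta, 0 < eta /\ Good O eta.
Proof.
  intros HO [m0 Hm0]. destruct (HO m0 Hm0) as [k [g [eps [He [Hc Hn]]]]].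
  destruct (fin_eta k (fun j eta => forall y z, Rabs (ival y - ival z) < eta -> Rabs (g j y - g j z) < eps/5)) as [eta [Heta H]].
  - intros i e e' He' HP y z Hyz. apply HP; lra.
  - intros i Hi. destruct (unif_cont (g i) (Hc i Hi) (eps/5)) as [eta [Heta H]]. lra. exists eta; split; auto.
  - exists eta; split; auto. exists m0, k, g, eps; repeat split; auto.
Qed.

Lemma Good_use O eta N : (1 <= N)%nat -> INR N * eta > 1 -> Good O eta ->
  exists m0 : ProbMeasure, forall nu : ProbMeasure, (forall a, (a<N)%nat -> nu (Jc N a) = m0 (Jc N a)) -> O nu.
Proof.
  intros HN Heta [m0 [k [g [eps [He [Hc Hn]]]]]]. exists m0. intros nu Hnu. apply Hn.
  intros j Hj a b Ha Hb.
  assert (Rabs (a - b) <= 4 * (eps/5)); [|lra].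
  apply (close_integrals m0 nu N (Jc N) (Jc_ok N HN) (midp N) (g j) (eps/5)); auto. lra.
  - intros a' x Ha' Jx. left. apply Hc; auto.
    pose proof (Jc_diam N HN a' x (midp N a') Ha' Jx (Oc_Jc N a' _ (midp_O N HN a' Ha'))).
    pose proof (Rabs_pos (ival x - ival (midp N a'))). pose proof (INRN_pos N HN). nra.
  - intros a' Ha'. symmetry; apply Hnu; auto.
Qed.

Theorem mainTheorem5 (f : nat -> II -> II)
  (hcont : forall n, (1 <= n)%nat -> I_cont (f n))
  (hwm3 : weakly_mixing_order I_open (I_step f) 3) :
  weakly_mixing_all M_open (M_step f).
Proof.
  intros mm _ U V HUV.
  destruct (fin_eta mm (fun i e => Good (U i) e /\ Good (V i) e)) as [eta [Heta HG]].
  { intros i e e' He [h1 h2]; split; eapply Good_mono; eauto. }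
  { intros i Hi. destruct (HUV i Hi) as [HU [HV [hu hv]]].
    destruct (Good_exists _ HU hu) as [e1 [He1 G1]]. destruct (Good_exists _ HV hv) as [e2 [He2 G2]].
    exists (Rmin e1 e2). split. apply Rmin_pos; auto.
    split; eapply Good_mono; eauto; split; try apply Rmin_pos; auto; [apply Rmin_l|apply Rmin_r]. }
  destruct (INR_archimed eta 1 Heta) as [N0 HN0].
  set (N := S N0).
  assert (HN : (1 <= N)%nat) by (unfold N; lia).
  assert (HNe : INR N * eta > 1). { unfold N; rewrite S_INR. lra. }
  destruct (spread f hcont hwm3 (dl N) (dl_bnd N HN) N (Oc N)) as [n [Hn Hsp]].
  { intros i Hi. split. apply Oc_open; auto. exists (midp N i); apply midp_O; auto. }
  assert (Hu : exists u : nat -> nat -> II, forall a b, (a < N)%nat -> (b < N)%nat ->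
            Oc N a (u a b) /\ fcomp f n (u a b) = midp N b).
  { assert (forall a b, exists v : II, (a < N)%nat -> (b < N)%nat -> Oc N a v /\ fcomp f n v = midp N b).
    { intros a b. destruct (lt_dec a N) as [Ha|Ha]; [destruct (lt_dec b N) as [Hb|Hb]|].
      - destruct (Hsp a Ha (midp N b) (midp_dl N HN b Hb)) as [v Hv]. exists v; auto.
      - exists (clamp 0); intros; lia.
      - exists (clamp 0); intros; lia. }
    exists (fun a b => proj1_sig (constructive_indefinite_description _ (H a b))).
    intros a b; apply (proj2_sig (constructive_indefinite_description _ (H a b))). }
  destruct Hu as [u Hu].
  exists n; split; auto. intros i Hi.
  destruct (HG i Hi) as [GU GV].
  destruct (Good_use _ _ N HN HNe GU) as [mu0 Hmu0].
  destruct (Good_use _ _ N HN HNe GV) as [nu0 Hnu0].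
  set (w := fun a b => mu0 (Jc N a) * nu0 (Jc N b)).
  assert (Hw : forall a b, (a<N)%nat -> (b<N)%nat -> 0 <= w a b).
  { intros; unfold w; apply Rmult_le_pos; apply mu_nonneg; apply Jc_Borel; auto. }
  assert (H1 : fsum (fun a => fsum (fun b => w a b) N) N = 1).
  { unfold w. rewrite (fsum_ext _ (fun a => mu0 (Jc N a) * 1)).
    rewrite fsum_scalr, (cells_sum mu0 N (Jc N) (Jc_ok N HN)); ring.
    intros a Ha. rewrite fsum_scal, (cells_sum nu0 N (Jc N) (Jc_ok N HN)); auto. }
  exists (atomic N N w u Hw H1), (atomic N N w (fun a b => midp N b) Hw H1).
  split; [|split].
  - apply Hmu0. intros a' Ha'. rewrite atomic_val by (apply Jc_Borel; auto). unfold aval.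
    rewrite (fsum_ext _ (fun a => (if Nat.eq_dec a a' then 1 else 0) * fsum (fun b => w a b) N)).
    rewrite fsum_delta by auto. unfold w. rewrite fsum_scal, (cells_sum nu0 N (Jc N) (Jc_ok N HN)); ring.
    intros a Ha. rewrite <- fsum_scal. apply fsum_ext. intros b Hb.
    rewrite (ind_Jc N HN a a' (u a b)); auto. ring.
    apply Oc_Jc, Hu; auto.
  - unfold M_step. intros A HA. rewrite !atomic_val; auto.
    2:{ apply Borel_preimage; auto. apply fcomp_cont; auto. }
    unfold aval. apply fsum_ext; intros a Ha; apply fsum_ext; intros b Hb.
    destruct (Hu a b Ha Hb) as [_ ->]; auto.
  - apply Hnu0. intros b' Hb'. rewrite atomic_val by (apply Jc_Borel; auto). unfold aval.
    rewrite (fsum_ext _ (fun a => w a b')).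
    unfold w. rewrite fsum_scalr, (cells_sum mu0 N (Jc N) (Jc_ok N HN)); ring.
    intros a Ha. rewrite (fsum_ext _ (fun b => (if Nat.eq_dec b b' then 1 else 0) * w a b)).
    apply (fsum_delta (fun b => w a b)); auto.
    intros b Hb. rewrite (ind_Jc N HN b b' (midp N b)); auto. ring.
    apply Oc_Jc, midp_O; auto.
Qed.
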